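(* Let $G=\mathbb Z\ast\mathbb Z^2=\langle t\rangle\ast\langle a,b\mid [a,b]\rangle$ and let $\varphi$ be the automorphism of $G$ with $\varphi(t)=ta$, $\varphi(a)=a$, $\varphi(b)=b$. Then $\operatorname{Fix}(\varphi)=\langle a,b\rangle\ast t\langle a,b\rangle t^{-1}\cong\mathbb Z^2\ast\mathbb Z^2$, so $\operatorname{rk}(\operatorname{Fix}(\varphi))=4=2(\operatorname{rk}(G)-1)$; thus the bound $n(\operatorname{rk}(G)-n+1)$ for endomorphisms of a free product of $n$ free abelian groups is attained.
   Context: $\operatorname{rk}$ is the minimal number of generators; $\operatorname{Fix}(\varphi)=\{g\mid\varphi(g)=g\}$. *)

(* Defs.v *)
(* The free product A * B of two abelian groups (written
   additively, zmodType) is modelled concretely by reduced words: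
   sequences of syllables (inl x, x in A nonzero, or inr y, y in B nonzero)
   in which consecutive syllables come from different factors. *)
From mathcomp Require Import all_boot all_order all_algebra.
Set Implicit Arguments. Unset Strict Implicit. Unset Printing Implicit Defensive.
Import GRing.Theory.
Local Open Scope ring_scope.

Section FreeProduct.
Variables A B : zmodType.

Definition syl := (A + B)%type.
Definition word := seq syl.

Definition push (s : syl) (w : word) : word :=
  match s, w with
  | inl x, inl y :: w' => if x + y == 0 then w' else inl (x + y) :: w'
  | inr x, inr y :: w' => if x + y == 0 then w' else inr (x + y) :: w'
  | inl x, _ => if x == 0 then w else s :: w
  | inr x, _ => if x == 0 then w else s :: w
  end.

Definition norm (w : word) : word := foldr push [::] w.
Definition reduced (w : word) : bool := norm w == w.

Definition wone : word := [::].
Definition wmul (w1 w2 : word) : word := foldr push w2 w1.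
Definition negsyl (s : syl) : syl :=
  match s with inl x => inl (- x) | inr y => inr (- y) end.
Definition winv (w : word) : word := rev (map negsyl w).

Definition expn_w (w : word) (n : nat) : word := iter n (wmul w) wone.
Definition zpow (w : word) (z : int) : word :=
  match z with Posz n => expn_w w n | Negz n => winv (expn_w w n.+1) end.

Definition gen (S : seq word) (g : word) : Prop :=
  exists l : seq (bool * word),
    all (fun p => p.2 \in S) l /\
    g = foldr (fun p acc => wmul (if p.1 then winv p.2 else p.2) acc) wone l.

Definition generates (S : seq word) (H : word -> Prop) : Prop :=
  all reduced S /\ forall g, reduced g -> (H g <-> gen S g).
Definition has_rank (H : word -> Prop) (n : nat) : Prop :=
  (exists S, size S = n /\ generates S H) /\
  (forall S, generates S H -> (n <= size S)%N).

End FreeProduct.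

(* homomorphism out of a free product determined by its values on syllables
   (i.e. by homomorphisms on the two factors) *)
Definition ext (A B C D : zmodType) (f : syl A B -> word C D) (w : word A B)
  : word C D := foldr (fun s acc => wmul (f s) acc) (wone C D) w.

Definition Z2 : zmodType := (int * int)%type.
Definition GW := word int Z2.
Definition t_ : GW := [:: inl 1].
Definition a_ : GW := [:: inr (1, 0)].
Definition b_ : GW := [:: inr (0, 1)].

Definition phi_syl (s : syl int Z2) : GW :=
  match s with
  | inl n => zpow (wmul t_ a_) n
  | inr v => push (inr v) (wone int Z2)
  end.
Definition phi : GW -> GW := ext phi_syl.

Definition Fix (g : GW) : Prop := reduced g /\ phi g = g.

Definition psi_syl (s : syl Z2 Z2) : GW :=
  match s with
  | inl v => push (inr v) (wone int Z2)
  | inr v => wmul t_ (wmul (push (inr v) (wone int Z2)) (winv t_))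
  end.
Definition psi : word Z2 Z2 -> GW := ext psi_syl.

(* Main.v *)
Require Import Defs.
From mathcomp Require Import all_boot all_order all_algebra zify.
Set Implicit Arguments. Unset Strict Implicit. Unset Printing Implicit Defensive.
Import GRing.Theory.
Local Open Scope ring_scope.

Section Gen.
Variables A B : zmodType.
Local Notation syl := (syl A B).
Local Notation word := (word A B).
Local Notation winv := (@winv A B).
Local Notation negsyl := (@negsyl A B).
Local Notation wmul := (@wmul A B).
Local Notation push := (@push A B).
Local Notation norm := (@norm A B).
Local Notation reduced := (@reduced A B).

Definition side (s : syl) : bool := if s is inl _ then true else false.
Definition nz (s : syl) : bool := match s with inl x => x != 0 | inr y => y != 0 end.
Definition altr (x y : syl) : bool := side x != side y.
Definition red (w : word) : bool := all nz w && sorted altr w.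

Lemma red_cons s w : red (s :: w) -> red w.
Proof. by case/andP=> /= /andP[_ h1] /path_sorted h2; apply/andP. Qed.

Lemma red_cons_iff s w : red (s :: w) = [&& nz s, red w & (if w is s'::_ then altr s s' else true)].
Proof.
rewrite /red /=; case: w => [|s' w] /=; first by rewrite !andbT.
by rewrite -!andbA; do !bool_congr.
Qed.

Lemma push_red s w : red w -> red (push s w).
Proof.
move=> hw; case: s => [x|x]; case: w hw => [|[y|y] w] hw /=.
- by case: ifP => // h; rewrite red_cons_iff /= h.
- case: eqP => h; first exact: red_cons hw.
  move: hw; rewrite !red_cons_iff => /and3P[_ -> ->] /=.
  by rewrite andbT; apply/eqP.
- case: ifP => // h; move: hw => hw; rewrite red_cons_iff /= h hw.
  by [].
- by case: ifP => // h; rewrite red_cons_iff /= h.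
- case: ifP => // h; move: hw => hw; rewrite red_cons_iff /= h hw.
  by [].
- case: eqP => h; first exact: red_cons hw.
  move: hw; rewrite !red_cons_iff => /and3P[_ -> ->] /=.
  by rewrite andbT; apply/eqP.
Qed.

Lemma push_cons s w : red (s :: w) -> push s w = s :: w.
Proof.
rewrite red_cons_iff => /and3P[h _ h2].
case: s h h2 => [x|x]; case: w => [|[y|y] w] //= h h2; by rewrite ?(negbTE h).
Qed.

Lemma norm_red w : red (norm w).
Proof. by elim: w => [|s w IH] //=; apply: push_red. Qed.

Lemma normK w : red w -> norm w = w.
Proof.
elim: w => [|s w IH] //= h; rewrite IH ?(red_cons h) //; exact: push_cons.
Qed.

Lemma reducedE w : reduced w = red w.
Proof.
apply/idP/idP => [/eqP <-|h]; first exact: norm_red.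
by rewrite /reduced normK.
Qed.

Lemma pushLL x y w : red w -> push (inl x) (push (inl y) w) = push (inl (x+y)) w.
Proof.
case: w => [|[z|z] w] /=.
- by case: eqP => [->|_] _ /=; rewrite ?addr0.
- rewrite red_cons_iff => /and3P[hz hw hw2].
  case: eqP => [hyz|hyz].
  + have -> : x + y + z = x by rewrite -addrA hyz addr0.
    by case: w hw hw2 => [|[u|u] w'].
  + by rewrite /= addrA.
- by case: eqP => [->|_] _ /=; rewrite ?addr0.
Qed.

Lemma pushRR x y w : red w -> push (inr x) (push (inr y) w) = push (inr (x+y)) w.
Proof.
case: w => [|[z|z] w] /=.
- by case: eqP => [->|_] _ /=; rewrite ?addr0.
- by case: eqP => [->|_] _ /=; rewrite ?addr0.
- rewrite red_cons_iff => /and3P[hz hw hw2].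
  case: eqP => [hyz|hyz].
  + have -> : x + y + z = x by rewrite -addrA hyz addr0.
    by case: w hw hw2 => [|[u|u] w'].
  + by rewrite /= addrA.
Qed.

Lemma push0L w : red w -> push (inl 0) w = w.
Proof.
case: w => [|[z|z] w] //=; rewrite ?eqxx // add0r red_cons_iff => /and3P[hz _ _].
by rewrite (negbTE hz).
Qed.

Lemma push0R w : red w -> push (inr 0) w = w.
Proof.
case: w => [|[z|z] w] //=; rewrite ?eqxx // add0r red_cons_iff => /and3P[hz _ _].
by rewrite (negbTE hz).
Qed.

Lemma wmul_red v w : red w -> red (wmul v w).
Proof. by elim: v => [|s v IH] //= h; apply: push_red; apply: IH. Qed.

Lemma wmul_push s v w : red v -> red w -> wmul (push s v) w = push s (wmul v w).
Proof.
move=> hv hw; have hvw := wmul_red v hw.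
case: s => x; have [->|hx] := eqVneq x 0;
  rewrite ?push0L ?push0R //.
- case: v hv hvw => [|[y|y] v] hv hvw.
  + by have -> : push (inl x) [::] = [:: inl x] by rewrite /= (negbTE hx).
  + have -> : push (inl x) (inl y :: v) = if x + y == 0 then v else inl (x+y) :: v by [].
    change (wmul (inl y :: v) w) with (push (inl y) (wmul v w)).
    rewrite pushLL; last exact: wmul_red. case: (x + y =P 0) => [->|_] //; by rewrite push0L ?wmul_red.
  + by have -> : push (inl x) (inr y :: v) = inl x :: inr y :: v by rewrite /= (negbTE hx).
- case: v hv hvw => [|[y|y] v] hv hvw.
  + by have -> : push (inr x) [::] = [:: inr x] by rewrite /= (negbTE hx).
  + by have -> : push (inr x) (inl y :: v) = inr x :: inl y :: v by rewrite /= (negbTE hx).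
  + have -> : push (inr x) (inr y :: v) = if x + y == 0 then v else inr (x+y) :: v by [].
    change (wmul (inr y :: v) w) with (push (inr y) (wmul v w)).
    rewrite pushRR; last exact: wmul_red. case: (x + y =P 0) => [->|_] //; by rewrite push0R ?wmul_red.
Qed.

Lemma wmulA u v w : red v -> red w -> wmul (wmul u v) w = wmul u (wmul v w).
Proof.
move=> hv hw; elim: u => [|s u IH] //=.
by rewrite wmul_push ?IH ?wmul_red.
Qed.

Lemma wmul1r w : red w -> wmul w [::] = w.
Proof. exact: normK. Qed.

Lemma nz_neg s : nz (negsyl s) = nz s.
Proof. by case: s => x /=; rewrite oppr_eq0. Qed.

Lemma winv_red w : red w -> red (winv w).
Proof.
case/andP=> h1 h2; apply/andP; split.
  by rewrite /winv all_rev all_map; apply: sub_all h1 => s /=; rewrite nz_neg.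
rewrite /winv rev_sorted.
have : sorted altr (map negsyl w).
  by rewrite sorted_map; apply: sub_sorted h2 => x y; case: x; case: y.
by apply: sub_sorted => x y; rewrite /altr eq_sym.
Qed.

Lemma negsylK : involutive negsyl.
Proof. by case=> x /=; rewrite opprK. Qed.

Lemma winvK : involutive winv.
Proof. by move=> w; rewrite /winv map_rev revK (mapK negsylK). Qed.

Lemma wmul_rcons u x v : wmul (rcons u x) v = wmul u (push x v).
Proof. exact: foldr_rcons. Qed.

Lemma winv_cons s w : winv (s :: w) = rcons (winv w) (negsyl s).
Proof. by rewrite /winv /= rev_cons. Qed.

Lemma wmulVw w : red w -> wmul (winv w) w = [::].
Proof.
elim: w => [|s w IH] // h; rewrite winv_cons wmul_rcons.
have -> : push (negsyl s) (s :: w) = w.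
  by case: s h => x h /=; rewrite addNr eqxx.
exact: IH (red_cons h).
Qed.

Lemma wmulwV w : red w -> wmul w (winv w) = [::].
Proof. by move=> h; rewrite -{1}(winvK w) wmulVw ?winv_red. Qed.

Lemma inv_uniq x y : red x -> red y -> wmul x y = [::] -> y = winv x.
Proof.
move=> hx hy h.
have -> : y = wmul (wmul (winv x) x) y by rewrite wmulVw.
by rewrite wmulA // h wmul1r // winv_red.
Qed.

Lemma winv_mul u v : red u -> red v -> winv (wmul u v) = wmul (winv v) (winv u).
Proof.
move=> hu hv; symmetry; apply: inv_uniq; rewrite ?wmul_red ?winv_red //.
rewrite wmulA ?wmul_red ?winv_red // -(wmulA v) ?winv_red //.
by rewrite wmulwV //= wmulwV.
Qed.

Lemma winv_nil : winv [::] = [::]. Proof. by []. Qed.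

Local Notation expn_w := (@expn_w A B).
Local Notation zpow := (@zpow A B).

Lemma expn_red w n : red w -> red (expn_w w n).
Proof. by move=> h; elim: n => [|n IH] //=; apply: wmul_red. Qed.

Lemma expnD w n m : red w -> expn_w w (n + m) = wmul (expn_w w n) (expn_w w m).
Proof.
move=> h; elim: n => [|n IH]; first by [].
by rewrite addSn /= IH wmulA ?expn_red.
Qed.

Lemma expn1 w : red w -> expn_w w 1 = w.
Proof. by move=> h; rewrite /= wmul1r. Qed.

Lemma expnSr w n : red w -> expn_w w n.+1 = wmul (expn_w w n) w.
Proof. by move=> h; rewrite -addn1 expnD // expn1. Qed.

Lemma zpow_red w z : red w -> red (zpow w z).
Proof. by move=> h; case: z => n; [apply: expn_red | apply: winv_red; apply: expn_red]. Qed.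

Lemma zpowN w n : zpow w (Negz n) = winv (expn_w w n.+1). Proof. by []. Qed.
Lemma zpowPos w n : zpow w (Posz n) = expn_w w n. Proof. by []. Qed.
Lemma expnS w n : expn_w w n.+1 = wmul w (expn_w w n). Proof. by []. Qed.
Lemma expn0 w : expn_w w 0 = [::]. Proof. by []. Qed.

Lemma zpowS w z : red w -> zpow w (z + 1) = wmul w (zpow w z).
Proof.
move=> h; case: z => [n|[|n]].
- have -> : Posz n + 1 = Posz n.+1 by lia. by [].
- by rewrite zpowN expn1 // wmulwV.
- have -> : Negz n.+1 + 1 = Negz n by rewrite !NegzE; lia.
  rewrite !zpowN [expn_w w n.+2]expnSr // winv_mul ?expn_red //.
  by rewrite -(@wmulA w (winv w)) ?winv_red ?expn_red // wmulwV.
Qed.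

Lemma zpowP w z : red w -> zpow w (z - 1) = wmul (winv w) (zpow w z).
Proof.
move=> h; case: z => [[|n]|n].
- by rewrite zpowN zpowPos expn0 expn1 // wmul1r ?winv_red.
- have -> : Posz n.+1 - 1 = Posz n by lia.
  by rewrite !zpowPos expnS -wmulA ?expn_red // wmulVw.
- have -> : Negz n - 1 = Negz n.+1 by rewrite !NegzE; lia.
  by rewrite !zpowN [expn_w w n.+2]expnSr ?winv_mul ?expn_red.
Qed.

Lemma zpowD w x y : red w -> zpow w (x + y) = wmul (zpow w x) (zpow w y).
Proof.
move=> h; case: x => n; elim: n => [|n IH].
- by rewrite add0r.
- have -> : Posz n.+1 + y = (Posz n + y) + 1 by lia.
  by rewrite zpowS ?IH ?zpowPos ?expnS -?wmulA ?expn_red ?zpow_red.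
- have -> : Negz 0 + y = y - 1 by rewrite NegzE; lia.
  by rewrite zpowP // zpowN expn1.
- have -> : Negz n.+1 + y = (Negz n + y) - 1 by rewrite !NegzE; lia.
  rewrite zpowP // IH.
  have -> : Negz n.+1 = Negz n - 1 by rewrite !NegzE; lia.
  by rewrite zpowP // wmulA ?zpow_red.
Qed.

Section Conj.
Variable c : word.
Hypothesis hc : red c.
Definition conjw (X : word) := wmul c (wmul X (winv c)).

Lemma conj_red X : red (conjw X).
Proof. by rewrite /conjw wmul_red ?wmul_red ?winv_red. Qed.

Lemma conj_nil : conjw [::] = [::].
Proof. exact: wmulwV. Qed.

Lemma conj_mul X Y : red X -> red Y -> conjw (wmul X Y) = wmul (conjw X) (conjw Y).
Proof.
move=> hX hY; rewrite /conjw.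
have hc' := winv_red hc.
have h1 := wmul_red Y hc'.
have h2 := wmul_red c h1.
rewrite (@wmulA c (wmul X (winv c))) ?wmul_red //.
rewrite (@wmulA X (winv c)) //.
rewrite -(@wmulA (winv c) c) // wmulVw //.
by rewrite (@wmulA X Y).
Qed.

Lemma conj_inv X : red X -> conjw (winv X) = winv (conjw X).
Proof.
move=> hX; apply: inv_uniq; rewrite ?conj_red //.
by rewrite -conj_mul ?winv_red // wmulwV // conj_nil.
Qed.

Lemma conj_expn X n : red X -> conjw (expn_w X n) = expn_w (conjw X) n.
Proof.
move=> hX; elim: n => [|n IH] /=; first exact: conj_nil.
by rewrite conj_mul ?expn_red // IH.
Qed.

Lemma conj_zpow X z : red X -> conjw (zpow X z) = zpow (conjw X) z.
Proof.
move=> hX; case: z => n; rewrite ?zpowPos ?zpowN ?conj_expn //.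
by rewrite conj_inv ?expn_red // conj_expn.
Qed.
End Conj.

Definition itm (p : bool * word) := if p.1 then winv p.2 else p.2.
Definition gfold (l : seq (bool * word)) := foldr (fun p acc => wmul (itm p) acc) [::] l.

Lemma gfold_red l : all (fun p => red p.2) l -> red (gfold l).
Proof.
elim: l => [|[b x] l IH] //= /andP[hx hl]; apply: wmul_red; exact: IH.
Qed.

Lemma itm_red p : red p.2 -> red (itm p).
Proof. by case: p => [[] x] //= h; apply: winv_red. Qed.

Lemma gfold_cat l1 l2 : all (fun p => red p.2) l1 -> all (fun p => red p.2) l2 ->
  gfold (l1 ++ l2) = wmul (gfold l1) (gfold l2).
Proof.
move=> h1 h2; elim: l1 h1 => [|p l1 IH] //= /andP[hp hl].
by rewrite IH // wmulA ?gfold_red.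
Qed.

Lemma gfold_rev l : all (fun p => red p.2) l ->
  winv (gfold l) = gfold (rev (map (fun p => (~~ p.1, p.2)) l)).
Proof.
elim: l => [|p l IH] //= /andP[hp hl].
rewrite winv_mul ?itm_red ?gfold_red // IH // rev_cons -cats1 gfold_cat.
- congr wmul; rewrite /= wmul1r; last by apply: itm_red.
  by case: p hp => [[] x] //= _; rewrite winvK.
- by rewrite all_rev all_map; apply: sub_all hl => q.
- by rewrite /= hp.
Qed.

Variable S : seq word.
Hypothesis hS : all red S.

Lemma gen_gfold g : gen S g <-> exists l, all (fun p : bool * word => p.2 \in S) l /\ g = gfold l.
Proof. by []. Qed.

Lemma allS l : all (fun p : bool * word => p.2 \in S) l -> all (fun p => red p.2) l.
Proof. by move=> h; apply/allP => p /(allP h) /(allP hS). Qed.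

Lemma gen_red g : gen S g -> red g.
Proof. by move/gen_gfold=> [l [hl ->]]; apply: gfold_red; apply: allS. Qed.

Lemma gen_nil : gen S [::].
Proof. by exists [::]. Qed.

Lemma gen_mem s : s \in S -> gen S s.
Proof.
move=> h; exists [:: (false, s)]; split; first by rewrite /= h.
by rewrite /= wmul1r //; apply: (allP hS).
Qed.

Lemma gen_mul x y : gen S x -> gen S y -> gen S (wmul x y).
Proof.
move=> /gen_gfold [l1 [h1 ->]] /gen_gfold [l2 [h2 ->]]; apply/gen_gfold.
exists (l1 ++ l2); split.
  by rewrite all_cat h1 h2.
by rewrite gfold_cat ?allS.
Qed.

Lemma gen_inv x : gen S x -> gen S (winv x).
Proof.
move=> /gen_gfold [l [h ->]]; apply/gen_gfold; exists (rev (map (fun p => (~~ p.1, p.2)) l)); split.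
  by rewrite all_rev all_map; apply: sub_all h => q.
by rewrite gfold_rev ?allS.
Qed.

Lemma gen_expn x n : gen S x -> gen S (expn_w x n).
Proof. by move=> h; elim: n => [|n IH] /=; [apply: gen_nil | apply: gen_mul]. Qed.

Lemma gen_zpow x z : gen S x -> gen S (zpow x z).
Proof. by move=> h; case: z => n; rewrite ?zpowPos ?zpowN; [|apply: gen_inv]; apply: gen_expn. Qed.
End Gen.

Section Ext.
Variables A B C D : zmodType.
Variable f : syl A B -> word C D.
Hypothesis fred : forall s, red (f s).
Hypothesis fL : forall x y, f (inl (x + y)) = wmul (f (inl x)) (f (inl y)).
Hypothesis fR : forall x y, f (inr (x + y)) = wmul (f (inr x)) (f (inr y)).
Hypothesis f0L : f (inl 0) = [::].
Hypothesis f0R : f (inr 0) = [::].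

Lemma ext_cons s w : ext f (s :: w) = wmul (f s) (ext f w). Proof. by []. Qed.

Lemma ext_red w : red (ext f w).
Proof. by elim: w => [|s w IH] //=; apply: wmul_red. Qed.

Lemma ext_push s w : red w -> ext f (push s w) = wmul (f s) (ext f w).
Proof.
move=> hw; case: s => x; have [->|hx] := eqVneq x 0;
  rewrite ?push0L ?push0R ?f0L ?f0R //.
- case: w hw => [|[y|y] w] hw.
  + by have -> : push (inl x) [::] = [:: inl x] by rewrite /= (negbTE hx).
  + have -> : push (inl x) (inl y :: w) = if x + y == 0 then w else inl (x+y) :: w by [].
    rewrite ext_cons -wmulA ?ext_red // -fL.
    by case: (x + y =P 0) => [->|_]; rewrite ?f0L.
  + by have -> : push (inl x) (inr y :: w) = inl x :: inr y :: w by rewrite /= (negbTE hx).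
- case: w hw => [|[y|y] w] hw.
  + by have -> : push (inr x) [::] = [:: inr x] by rewrite /= (negbTE hx).
  + by have -> : push (inr x) (inl y :: w) = inr x :: inl y :: w by rewrite /= (negbTE hx).
  + have -> : push (inr x) (inr y :: w) = if x + y == 0 then w else inr (x+y) :: w by [].
    rewrite ext_cons -wmulA ?ext_red // -fR.
    by case: (x + y =P 0) => [->|_]; rewrite ?f0R.
Qed.

Lemma ext_norm w : ext f (norm w) = ext f w.
Proof. elim: w => [|s w IH] //=; by rewrite ext_push ?norm_red // IH. Qed.

Lemma ext_mul u v : red v -> ext f (wmul u v) = wmul (ext f u) (ext f v).
Proof.
move=> hv; elim: u => [|s u IH] //=.
by rewrite ext_push ?wmul_red // IH wmulA ?ext_red.
Qed.

Lemma ext_inv w : red w -> ext f (winv w) = winv (ext f w).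
Proof.
move=> hw; apply: inv_uniq; rewrite ?ext_red //.
by rewrite -ext_mul ?winv_red // wmulwV.
Qed.
End Ext.

Lemma ext_flat (A B C D : zmodType) (f : syl A B -> word C D) w :
  ext f w = norm (flatten (map f w)).
Proof. elim: w => [|s w IH] //. by rewrite ext_cons IH /norm /= foldr_cat. Qed.


Definition A0 : Z2 := (1,0).
Lemma A0_neq0 : A0 != 0. Proof. by []. Qed.
Lemma ta_eq : wmul t_ a_ = [:: inl 1; inr A0]. Proof. by []. Qed.
Lemma ta_red : red (wmul t_ a_). Proof. by []. Qed.
Lemma t_red : red t_. Proof. by []. Qed.

Definition single (A B : zmodType) (v : B) : word A B := push (inr v) [::].

Lemma single_red (A B : zmodType) (v : B) : red (single A v).
Proof. exact: push_red. Qed.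

Lemma single_mul (A B : zmodType) (v w : B) :
  wmul (single A v) (single A w) = single A (v + w).
Proof.
rewrite /single wmul_push; [exact: pushRR|by []|exact: push_red].
Qed.

Lemma phi_fred s : red (phi_syl s).
Proof. case: s => [n|v] /=; [apply: zpow_red; exact: ta_red | exact: single_red]. Qed.
Lemma phi_fL x y : phi_syl (inl (x + y)) = wmul (phi_syl (inl x)) (phi_syl (inl y)).
Proof. by rewrite /= zpowD // ta_red. Qed.
Lemma phi_fR x y : phi_syl (inr (x + y)) = wmul (phi_syl (inr x)) (phi_syl (inr y)).
Proof. symmetry; exact: single_mul. Qed.
Lemma phi_f0L : phi_syl (inl 0) = [::]. Proof. by []. Qed.
Lemma phi_f0R : phi_syl (inr 0) = [::]. Proof. by []. Qed.

Lemma psi_fred s : red (psi_syl s).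
Proof. case: s => [v|v]; [exact: single_red | apply: (@conj_red _ _ t_) => //]. Qed.
Lemma psi_fL x y : psi_syl (inl (x + y)) = wmul (psi_syl (inl x)) (psi_syl (inl y)).
Proof. symmetry; exact: single_mul. Qed.
Lemma psi_fR x y : psi_syl (inr (x + y)) = wmul (psi_syl (inr x)) (psi_syl (inr y)).
Proof.
rewrite /psi_syl -!/(conjw t_ _) -!/(single _ _) -single_mul conj_mul //; exact: single_red.
Qed.
Lemma psi_f0L : psi_syl (inl 0) = [::]. Proof. by []. Qed.
Lemma psi_f0R : psi_syl (inr 0) = [::]. Proof. by []. Qed.

Definition LF := (Z2 * seq (bool * Z2))%type.
Definition lstep (s : syl int Z2) (p : LF) : LF :=
  match s with
  | inr v => (v + p.1, p.2)
  | inl n => if n == 0 then p else (0, nseq (absz n).-1 (0 < n, 0) ++ (0 < n, p.1) :: p.2)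
  end.
Definition lf (w : GW) : LF := foldr lstep (0, [::]) w.
Definition lrel (x y : bool * Z2) := (x.2 != 0) || (x.1 == y.1).
Definition lred (p : LF) := sorted lrel p.2.

Lemma lf_cons s w : lf (s :: w) = lstep s (lf w). Proof. by []. Qed.
Lemma lf_cat X Y : lf (X ++ Y) = foldr lstep (lf Y) X.
Proof. by rewrite /lf foldr_cat. Qed.

Definition cancels (s : syl int Z2) (w : GW) :=
  match s, w with inl x, inl y :: _ => (x != 0) && ((0 < x) != (0 < y)) | _, _ => false end.

Lemma lstepLL x y q : x != 0 -> y != 0 -> (0 < x) = (0 < y) ->
  lstep (inl (x + y)) q = lstep (inl x) (lstep (inl y) q).
Proof.
move=> hx hy hs /=; rewrite (negbTE hx) (negbTE hy).
have hxy : x + y != 0 by apply/eqP; lia.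
rewrite (negbTE hxy); have -> : (0 < x + y) = (0 < x) by lia.
rewrite -hs; congr (_, _).
have -> : (absz (x + y)).-1 = ((absz x).-1 + (absz y).-1).+1 by lia.
by rewrite -addnS nseqD -catA.
Qed.

Lemma lstep0L p : lstep (inl 0) p = p. Proof. by []. Qed.
Lemma lstep0R p : lstep (inr 0) p = p. Proof. by case: p => u l; rewrite /= add0r. Qed.

Lemma lf_push s w : red w -> ~~ cancels s w -> lf (push s w) = lstep s (lf w).
Proof.
move=> hw hc; case: s hc => x hc; have [->|hx] := eqVneq x 0;
  rewrite ?push0L ?push0R ?lstep0L ?lstep0R //.
- case: w hw hc => [|[y|y] w] hw hc.
  + by have -> : push (inl x) [::] = [:: inl x] by rewrite /= (negbTE hx).
  + have -> : push (inl x) (inl y :: w) = if x + y == 0 then w else inl (x+y) :: w by [].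
    move: hc; rewrite /= hx /= negbK => /eqP hs.
    have hy : y != 0 by move: hw; rewrite red_cons_iff => /and3P[].
    have hxy : x + y != 0 by apply/eqP; lia.
    by rewrite (negbTE hxy) !lf_cons lstepLL.
  + by have -> : push (inl x) (inr y :: w) = inl x :: inr y :: w by rewrite /= (negbTE hx).
- case: w hw hc => [|[y|y] w] hw hc.
  + by have -> : push (inr x) [::] = [:: inr x] by rewrite /= (negbTE hx).
  + by have -> : push (inr x) (inl y :: w) = inr x :: inl y :: w by rewrite /= (negbTE hx).
  + have -> : push (inr x) (inr y :: w) = if x + y == 0 then w else inr (x+y) :: w by [].
    rewrite !lf_cons /= addrA; case: (x + y =P 0) => [->|_] //.
    by rewrite add0r; case: (lf w).
Qed.

Lemma sorted_nseq_cat (T : Type) (r : rel T) k x s : sorted r (nseq k x ++ s) -> sorted r s.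
Proof. elim: k => [|k IH] //= h; apply: IH; exact: path_sorted h. Qed.

Lemma lred_step s p : lred (lstep s p) -> lred p.
Proof.
case: s => [n|v] //=; case: ifP => // _; rewrite /lred /= => h; have := sorted_nseq_cat h => /=.
exact: path_sorted.
Qed.

Lemma norm_cons (A B : zmodType) (s : syl A B) w : norm (s :: w) = push s (norm w).
Proof. by []. Qed.

Lemma lf_norm W : lred (lf W) -> lf (norm W) = lf W.
Proof.
elim: W => [|s W IH] // h.
have IH' := IH (lred_step h).
rewrite norm_cons lf_push ?norm_red ?IH' //.
case: s h => [x|v] h //=.
case hN: (norm W) => [|[y|y] W'] //.
apply/negP => /andP[hx hs].
have hy : y != 0 by move: (norm_red W); rewrite hN red_cons_iff => /and3P[].
move: IH'; rewrite hN lf_cons /= (negbTE hy) => hW.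
move: h; rewrite lf_cons -hW /= (negbTE hx) /lred /= => h.
have := sorted_nseq_cat h => /=.
case: (absz y).-1 => [|k] /= /andP[hr _]; move: hr; rewrite /lrel /= => e; by rewrite e in hs.
Qed.

Definition bump (b : bool) : Z2 := if b then A0 else 0.
Definition neghead (l : seq (bool * Z2)) := if l is (e, _) :: _ then ~~ e else false.
Fixpoint modl (l : seq (bool * Z2)) : seq (bool * Z2) :=
  match l with
  | [::] => [::]
  | (e, u) :: l' => (e, u + bump e - bump (neghead l')) :: modl l'
  end.
Definition modf (p : LF) : LF := (p.1 - bump (neghead p.2), modl p.2).

Definition blkP : GW := [:: inl 1; inr A0].
Definition blkN : GW := [:: inr (- A0); inl (-1)].

Lemma flatten_nseq_comm (T : Type) n (x : seq T) :
  flatten (nseq n x) ++ x = x ++ flatten (nseq n x).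
Proof. elim: n => [|n IH] /=; first by rewrite cats0. by rewrite -catA IH. Qed.

Lemma expn_ta n : expn_w (wmul t_ a_) n = flatten (nseq n blkP).
Proof.
elim: n => [|n IH] //; rewrite expnS IH ta_eq.
by case: n {IH} => [|n].
Qed.

Lemma winv_ta n : winv (expn_w (wmul t_ a_) n) = flatten (nseq n blkN).
Proof.
rewrite expn_ta /winv; elim: n => [|n IH] //=.
by rewrite -[_ :: _ :: _]/([:: inl (-1); inr (- A0)] ++ _) rev_cat IH (flatten_nseq_comm n blkN).
Qed.

Lemma foldP k q : foldr lstep q (flatten (nseq k.+1 blkP)) =
  (0, nseq k (true, A0) ++ (true, A0 + q.1) :: q.2).
Proof.
elim: k => [|k IH]; first by [].
have -> : flatten (nseq k.+2 blkP) = blkP ++ flatten (nseq k.+1 blkP) by [].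
by rewrite foldr_cat IH /= addr0.
Qed.

Lemma foldN k q : foldr lstep q (flatten (nseq k.+1 blkN)) =
  (- A0, nseq k (false, - A0) ++ (false, q.1) :: q.2).
Proof.
elim: k => [|k IH].
  by rewrite /= addr0.
have -> : flatten (nseq k.+2 blkN) = blkN ++ flatten (nseq k.+1 blkN) by [].
by rewrite foldr_cat IH /= addr0.
Qed.

Lemma modl_nseqP k u l : modl (nseq k (true, 0) ++ (true, u) :: l) =
  nseq k (true, A0) ++ (true, u + A0 - bump (neghead l)) :: modl l.
Proof.
elim: k => [|k IH] //=; rewrite IH; congr (_ :: _).
by case: k {IH} => [|k] /=; rewrite add0r subr0.
Qed.

Lemma modl_nseqN k u l : modl (nseq k (false, 0) ++ (false, u) :: l) =
  nseq k (false, - A0) ++ (false, u - bump (neghead l)) :: modl l.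
Proof.
elim: k => [|k IH] /=; first by rewrite addr0.
rewrite IH; congr (_ :: _).
by case: k {IH} => [|k] /=; rewrite addr0 sub0r.
Qed.

Lemma phi_step s p : foldr lstep (modf p) (phi_syl s) = modf (lstep s p).
Proof.
case: p => u l; case: s => [[[|k]|k]|v].
- by [].
- rewrite /phi_syl zpowPos expn_ta foldP /modf /=.
  rewrite modl_nseqP /=; congr (_, _); first by case: k => [|k] /=; rewrite subr0.
  by rewrite addrA (addrC A0).
- change (phi_syl (inl (Negz k))) with (zpow (wmul t_ a_) (Negz k)).
  rewrite zpowN winv_ta foldN /modf /=.
  rewrite modl_nseqN /=; congr (_, _).
  + by case: k => [|k] /=; rewrite sub0r.
- rewrite /phi_syl /=; case: eqP => [->|_] /=; first by rewrite add0r.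
  by rewrite /modf /= addrA.
Qed.

Lemma lf_phiW w : lf (flatten (map phi_syl w)) = modf (lf w).
Proof.
elim: w => [|s w IH] //=.
by rewrite lf_cat IH phi_step.
Qed.

Lemma sorted_nseq_cons k e u l : sorted lrel ((e, u) :: l) ->
  sorted lrel (nseq k (e, 0) ++ (e, u) :: l).
Proof.
elim: k => [|k IH] //= h; have := IH h.
by case: k {IH} => [|k] /= ->; rewrite /lrel /= eqxx ?orbT ?andbT.
Qed.

Lemma lf_inl1 n w : n != 0 -> (lf (inl n :: w)).1 = 0.
Proof. by move=> hn; rewrite lf_cons /= (negbTE hn). Qed.

Lemma path_nz e u l : u != 0 -> sorted lrel l -> path lrel (e, u) l.
Proof. by case: l => [|x l] //= hu ->; rewrite /lrel /= hu. Qed.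

Lemma lred_lf w : red w -> lred (lf w).
Proof.
elim: w => [|s w IH] // h; have hw := red_cons h; have IH' := IH hw.
case: s h => [n|v] h; rewrite lf_cons /lred /=; last exact: IH'.
case: ifP => // hn; rewrite /=; apply: sorted_nseq_cons => /=.
move: h; rewrite red_cons_iff => /and3P[_ _].
case: w {IH} hw IH' => [|[m|v] w] //= hw IH' hv.
move: hw; rewrite red_cons_iff => /and3P[hv0 hw hh].
have hu : (lf w).1 = 0.
  clear IH'; case: w hw hh => [|[m|v'] w'] //= hw hh.
  rewrite lf_inl1 //; by move: hw; rewrite red_cons_iff => /and3P[].
apply: path_nz; first by rewrite hu addr0.
exact: IH'.
Qed.

Lemma sorted_modl l : sorted lrel l -> sorted lrel (modl l).
Proof.
elim: l => [|[e u] l IH] //= h.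
case: l IH h => [|[e2 u2] l] //= IH /andP[hr hs].
apply/andP; split; last exact: (IH hs).
move: hr; rewrite /lrel /=; case: (e =P e2) => [->|ne]; first by rewrite !orbT.
rewrite !orbF => hu.
by case: e e2 ne {IH hs} => [] [] //= _; rewrite ?addrK ?addr0 ?subr0.
Qed.

Lemma lred_modf p : lred p -> lred (modf p).
Proof. exact: sorted_modl. Qed.

Lemma fix_modf g : red g -> phi g = g -> modf (lf g) = lf g.
Proof.
move=> hg hphi.
have hl : lred (lf (flatten (map phi_syl g))) by rewrite lf_phiW; apply: lred_modf; apply: lred_lf.
by rewrite -lf_phiW -lf_norm // -ext_flat -/phi hphi.
Qed.

Fixpoint altb (l : seq (bool * Z2)) : bool :=
  match l with
  | [::] => true
  | (true, _) :: (false, _) :: l' => altb l'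
  | _ => false
  end.

Lemma bump_eq0 b : (bump b == 0) = ~~ b.
Proof. by case: b. Qed.

Lemma addr_id (u x : Z2) : u + x = u -> x = 0.
Proof. by move=> h; apply: (@addrI _ u); rewrite addr0. Qed.

Lemma modl_fix l : modl l = l -> ~~ neghead l -> altb l.
Proof.
move: {2}(size l) (leqnn (size l)) => n; elim: n l => [|n IH] [|[e u] l] //= hs hm hn.
case: e hm hn => //= hm _; case: l hs hm => [|[e2 u2] l] /= hs.
  by move=> []; rewrite subr0 => /addr_id /eqP; rewrite (negbTE A0_neq0).
case=> hu hu2 hl.
case: e2 hu hu2 hl => /= hu hu2 hl.
  by move: hu; rewrite subr0 => /addr_id /eqP; rewrite (negbTE A0_neq0).
move: hu2; rewrite addr0 => /addr_id /eqP; rewrite oppr_eq0 bump_eq0 => hn.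
apply: IH => //; first by move: hs; rewrite ltnS => /ltnW.
Qed.

Definition lblk (q : bool * Z2) : GW := [:: inl (if q.1 then 1 else -1); inr q.2].
Definition unlf (p : LF) : GW := inr p.1 :: flatten (map lblk p.2).

Lemma iter_pushL k x (Z : GW) : red Z ->
  iter k (push (inl x)) (push (inl x) Z) = push (inl (x *+ k.+1)) Z.
Proof.
move=> hZ; elim: k => [|k IH] //.
have -> : iter k.+1 (push (inl x)) (push (inl x) Z) = push (inl x) (iter k (push (inl x)) (push (inl x) Z)) by [].
by rewrite IH pushLL // -mulrS.
Qed.

Lemma fold_lblk (k : nat) (e : bool) (Z : GW) : red Z ->
  foldr (@push int Z2) Z (flatten (map lblk (nseq k (e, 0)))) = iter k (push (inl (if e then 1 else -1))) Z.
Proof.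
move=> hZ; elim: k => [|k IH] //.
have hr : red (iter k (push (inl (if e then 1 else -1))) Z).
  by elim: k {IH} => [|k IHk] //; apply: push_red.
have -> : flatten (map lblk (nseq k.+1 (e, 0))) = lblk (e, 0) ++ flatten (map lblk (nseq k (e, 0))) by [].
rewrite foldr_cat IH.
change (push (inl (if e then 1 else -1)) (push (inr 0) (iter k (push (inl (if e then 1 else -1))) Z)) =
  push (inl (if e then 1 else -1)) (iter k (push (inl (if e then 1 else -1))) Z)).
by rewrite push0R.
Qed.

Lemma sgn_abs (n : int) : n != 0 -> (if 0 < n then 1 else -1) *+ (absz n).-1.+1 = n.
Proof.
case: n => [[|k]|k] //= _; first by rewrite natz.
by rewrite NegzE mulNrn natz.
Qed.

Lemma norm_unlf s p : norm (unlf (lstep s p)) = push s (norm (unlf p)).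
Proof.
case: p => u l; case: s => [n|v].
- have [n0|hn] := eqVneq n 0.
    by rewrite n0 lstep0L push0L // norm_red.
  set e := 0 < n; set k := (absz n).-1; set eps : int := if e then 1 else -1.
  have -> : lstep (inl n) (u, l) = (0, nseq k (e, 0) ++ (e, u) :: l) by rewrite /lstep (negbTE hn).
  have -> : unlf (0, nseq k (e, 0) ++ (e, u) :: l) =
    inr 0 :: (flatten (map lblk (nseq k (e, 0))) ++ (inl eps :: unlf (u, l))).
    by rewrite /unlf /= map_cat flatten_cat.
  rewrite norm_cons push0R ?norm_red // /norm foldr_cat -/(norm (inl eps :: unlf (u, l))).
  rewrite fold_lblk; last exact: norm_red.
  rewrite norm_cons iter_pushL; last exact: norm_red.
  by rewrite sgn_abs.
- have -> : unlf (lstep (inr v) (u, l)) = inr (v + u) :: flatten (map lblk l) by [].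
  rewrite !norm_cons.
  by rewrite pushRR // norm_red.
Qed.

Lemma norm_unlf_lf w : norm (unlf (lf w)) = norm w.
Proof.
elim: w => [|s w IH].
  have -> : unlf (lf [::]) = [:: inr 0] by [].
  by rewrite norm_cons push0R.
by rewrite lf_cons norm_unlf IH.
Qed.

Lemma lf_inj u w : red u -> red w -> lf u = lf w -> u = w.
Proof.
move=> hu hw h.
have e1 := norm_unlf_lf u; have e2 := norm_unlf_lf w.
rewrite (normK hu) in e1; rewrite (normK hw) in e2.
by rewrite -e1 -e2 h.
Qed.


Lemma psi_norm w : psi (norm w) = psi w.
Proof. exact: (ext_norm psi_fred psi_fL psi_fR psi_f0L psi_f0R). Qed.
Lemma psi_mul u v : red v -> psi (wmul u v) = wmul (psi u) (psi v).
Proof. exact: (ext_mul psi_fred psi_fL psi_fR psi_f0L psi_f0R). Qed.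
Lemma psi_inv w : red w -> psi (winv w) = winv (psi w).
Proof. exact: (ext_inv psi_fred psi_fL psi_fR psi_f0L psi_f0R). Qed.
Lemma psi_red w : red (psi w).
Proof. rewrite /psi; apply: ext_red; exact: psi_fred. Qed.
Lemma phi_mul u v : red v -> phi (wmul u v) = wmul (phi u) (phi v).
Proof. exact: (ext_mul phi_fred phi_fL phi_fR phi_f0L phi_f0R). Qed.
Lemma phi_inv w : red w -> phi (winv w) = winv (phi w).
Proof. exact: (ext_inv phi_fred phi_fL phi_fR phi_f0L phi_f0R). Qed.

Lemma psi_inr x : x != 0 -> psi_syl (inr x) = [:: inl 1; inr x; inl (-1)].
Proof.
move=> hx; rewrite /psi_syl.
have -> : push (inr x) (wone int Z2) = [:: inr x] by rewrite /= (negbTE hx).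
by rewrite /= (negbTE hx).
Qed.

Fixpoint prel (l : seq (bool * Z2)) : word Z2 Z2 :=
  match l with
  | (true, x) :: (false, y) :: l' => inr x :: inl y :: prel l'
  | _ => [::]
  end.
Definition pre (p : LF) : word Z2 Z2 := inl p.1 :: prel p.2.

Lemma lf_single (y : Z2) q : foldr lstep q (psi_syl (inl y)) = (y + q.1, q.2).
Proof.
rewrite /psi_syl; case: (y =P 0) => [->|hy].
  by rewrite add0r; case: q.
by have -> : push (inr y) (wone int Z2) = [:: inr y] by rewrite /= ifN //; apply/eqP.
Qed.

Lemma lf_prel l : altb l -> sorted lrel l -> lf (flatten (map psi_syl (prel l))) = (0, l).
Proof.
move: {2}(size l) (leqnn (size l)) => n; elim: n l => [|n IH] [|[[] x] l] // hs.
case: l hs => [|[[] y] l] // hs ha hl.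
have hr : lrel (true, x) (false, y) by case/andP: hl.
have hp : sorted lrel l by move: hl => /= /andP[_ /path_sorted].
have hx : x != 0 by move: hr; rewrite /lrel /= orbF.
have -> : flatten (map psi_syl (prel [:: (true, x), (false, y) & l])) =
  psi_syl (inr x) ++ psi_syl (inl y) ++ flatten (map psi_syl (prel l)) by [].
rewrite psi_inr // lf_cat lf_cat lf_single IH //.
- by rewrite /= !addr0.
- by move: hs => /= ; rewrite !ltnS => /ltnW.
Qed.

Lemma lf_pre p : altb p.2 -> lred p -> lf (flatten (map psi_syl (pre p))) = p.
Proof.
move=> ha hl; rewrite /pre /= lf_cat lf_prel // lf_single addr0.
by case: p {ha hl}.
Qed.

Lemma fix_img g : red g -> phi g = g -> exists2 w, red w & psi w = g.
Proof.
move=> hg hphi; set p := lf g.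
have hm : modf p = p := fix_modf hg hphi.
have hl : lred p := lred_lf hg.
have hn : ~~ neghead p.2.
  have := congr1 fst hm; rewrite /= => /addr_id /eqP.
  by rewrite oppr_eq0 bump_eq0.
have hmo : modl p.2 = p.2 by have := congr1 snd hm.
have ha := modl_fix hmo hn.
exists (norm (pre p)); first exact: norm_red.
rewrite psi_norm; apply: lf_inj; [exact: psi_red | exact: hg | ].
by rewrite /psi ext_flat lf_norm lf_pre.
Qed.

Lemma lf_psi_inr z q : z != 0 ->
  foldr lstep q (psi_syl (inr z)) = (0, (true, z) :: (false, q.1) :: q.2).
Proof. by move=> hz; rewrite psi_inr //= addr0. Qed.

Lemma lred_psiW x : red x -> lred (lf (flatten (map psi_syl x))).
Proof.
elim: x => [|s x IH] // h; have hx := red_cons h; have IH' := IH hx.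
have -> : flatten (map psi_syl (s :: x)) = psi_syl s ++ flatten (map psi_syl x) by [].
rewrite lf_cat; case: s h => [y|z] h.
  by rewrite lf_single.
have hz : z != 0 by move: h; rewrite red_cons_iff => /and3P[].
rewrite lf_psi_inr // /lred /=; apply/andP; split; first by rewrite /lrel /= hz.
move: h; rewrite red_cons_iff => /and3P[_ _].
case: x hx IH IH' => [|[y|z'] x] // hx IH IH' _.
apply: path_nz; last exact: IH'.
have -> : flatten (map psi_syl (inl y :: x)) = psi_syl (inl y) ++ flatten (map psi_syl x) by [].
have hy : y != 0 by move: hx; rewrite red_cons_iff => /and3P[].
rewrite lf_cat lf_single /=.
move: hx; rewrite red_cons_iff => /and3P[_ hx2 hh].
case: x {IH IH'} hx2 hh => [|[y'|z2] x] // hx2 hh; first by rewrite addr0.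
have -> : flatten (map psi_syl (inr z2 :: x)) = psi_syl (inr z2) ++ flatten (map psi_syl x) by [].
have hz2 : z2 != 0 by move: hx2; rewrite red_cons_iff => /and3P[].
by rewrite lf_cat lf_psi_inr //= addr0.
Qed.

Lemma psi_triv x : red x -> psi x = [::] -> x = [::].
Proof.
move=> hx h.
have hl : lf (flatten (map psi_syl x)) = (0, [::]).
  by rewrite -lf_norm ?lred_psiW // -ext_flat -/psi h.
clear h; case: x hx hl => [|[y|z] x] // hx.
- have -> : flatten (map psi_syl (inl y :: x)) = psi_syl (inl y) ++ flatten (map psi_syl x) by [].
  have hy : y != 0 by move: hx; rewrite red_cons_iff => /and3P[].
  rewrite lf_cat lf_single.
  move: hx; rewrite red_cons_iff => /and3P[_ hx2 hh].
  case: x hx2 hh => [|[y'|z2] x] // hx2 hh.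
    by rewrite /= addr0 => -[] /eqP; rewrite (negbTE hy).
  have -> : flatten (map psi_syl (inr z2 :: x)) = psi_syl (inr z2) ++ flatten (map psi_syl x) by [].
  have hz2 : z2 != 0 by move: hx2; rewrite red_cons_iff => /and3P[].
  by rewrite lf_cat lf_psi_inr.
- have -> : flatten (map psi_syl (inr z :: x)) = psi_syl (inr z) ++ flatten (map psi_syl x) by [].
  have hz : z != 0 by move: hx; rewrite red_cons_iff => /and3P[].
  by rewrite lf_cat lf_psi_inr.
Qed.

Lemma psi_inj u v : red u -> red v -> psi u = psi v -> u = v.
Proof.
move=> hu hv e.
have h1 : psi (wmul u (winv v)) = [::].
  by rewrite psi_mul ?winv_red // psi_inv // e wmulwV // psi_red.
have h2 := psi_triv (wmul_red u (winv_red hv)) h1.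
have := inv_uniq hu (winv_red hv) h2.
by move/(congr1 (@winv Z2 Z2)); rewrite !winvK.
Qed.


Section Singles.
Variables A B : zmodType.
Definition singleL (v : A) : word A B := push (inl v) [::].

Lemma singleL_red v : red (singleL v). Proof. exact: push_red. Qed.

Lemma singleL_mul v w : wmul (singleL v) (singleL w) = singleL (v + w).
Proof. by rewrite /singleL wmul_push; [exact: pushLL|by []|exact: push_red]. Qed.

Lemma winv_single (v : B) : winv (single A v) = single A (- v).
Proof. by rewrite /single /=; case: (v =P 0) => [->|/eqP hv]; rewrite ?oppr0 ?eqxx // oppr_eq0 (negbTE hv). Qed.

Lemma winv_singleL (v : A) : winv (singleL v) = singleL (- v).
Proof. by rewrite /singleL /=; case: (v =P 0) => [->|/eqP hv]; rewrite ?oppr0 ?eqxx // oppr_eq0 (negbTE hv). Qed.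

Lemma expn_single (v : B) n : expn_w (single A v) n = single A (v *+ n).
Proof.
elim: n => [|n IH]; first by rewrite mulr0n /single /singleL /= eqxx.
by rewrite expnS IH single_mul mulrS.
Qed.

Lemma expn_singleL (v : A) n : expn_w (singleL v) n = singleL (v *+ n).
Proof.
elim: n => [|n IH]; first by rewrite mulr0n /single /singleL /= eqxx.
by rewrite expnS IH singleL_mul mulrS.
Qed.

Lemma zpow_single (v : B) z : zpow (single A v) z = single A (v *~ z).
Proof.
case: z => n; first by rewrite zpowPos expn_single.
by rewrite zpowN expn_single winv_single NegzE mulrNz.
Qed.

Lemma zpow_singleL (v : A) z : zpow (singleL v) z = singleL (v *~ z).
Proof.
case: z => n; first by rewrite zpowPos expn_singleL.
by rewrite zpowN expn_singleL winv_singleL NegzE mulrNz.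
Qed.
End Singles.
Lemma pairmuln (u : Z2) n : u *+ n = (u.1 *+ n, u.2 *+ n).
Proof. elim: n => [|n IH] //. by rewrite !mulrS IH. Qed.
Lemma pairmulz (u : Z2) z : u *~ z = (u.1 *~ z, u.2 *~ z).
Proof. case: z => n; first by rewrite -!pmulrn pairmuln.
by rewrite !NegzE !mulrNz -!pmulrn pairmuln. Qed.
Lemma pairE (x y : int) : ((1,0) *~ x + (0,1) *~ y : Z2) = (x, y).
Proof. rewrite !pairmulz /= !mul0rz !intz. by rewrite -[LHS]/((x + 0, 0 + y)) addr0 add0r. Qed.

Definition S4 : seq GW :=
  [:: a_; b_; wmul t_ (wmul a_ (winv t_)); wmul t_ (wmul b_ (winv t_))].
Lemma S4_red : all (@red int Z2) S4. Proof. by []. Qed.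

Lemma phi_S4 s : s \in S4 -> phi s = s.
Proof.
rewrite !inE => /or4P[] /eqP ->; by vm_compute.
Qed.

Lemma phi_gfold l : all (fun p : bool * GW => p.2 \in S4) l -> phi (gfold l) = gfold l.
Proof.
elim: l => [|[b s] l IH] //= /andP[hs hl].
have hsr : red s by apply: (allP S4_red).
rewrite phi_mul; last by apply: gfold_red; apply: (allS S4_red).
rewrite IH //; congr wmul.
by case: b; rewrite /itm /= ?phi_inv // phi_S4.
Qed.

Lemma gen_fix g : gen S4 g -> phi g = g.
Proof. by move/gen_gfold => [l [hl ->]]; apply: phi_gfold. Qed.

Lemma a_single : a_ = single int ((1,0) : Z2). Proof. by []. Qed.
Lemma b_single : b_ = single int ((0,1) : Z2). Proof. by []. Qed.

Lemma single_ab (v : Z2) : single int v = wmul (zpow a_ v.1) (zpow b_ v.2).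
Proof.
by case: v => x y; rewrite a_single b_single !zpow_single single_mul pairE.
Qed.

Lemma gen_psi_syl s : gen S4 (psi_syl s).
Proof.
have hm : forall s : GW, s \in S4 -> gen S4 s by move=> s0 h; exact: (gen_mem S4_red h).
case: s => v.
- change (gen S4 (single int v)); rewrite single_ab.
  by apply: (gen_mul S4_red); apply: (gen_zpow S4_red); apply: hm.
- change (gen S4 (conjw t_ (single int v))); rewrite single_ab conj_mul //; try exact: zpow_red.
  rewrite !conj_zpow //.
  by apply: (gen_mul S4_red); apply: (gen_zpow S4_red); apply: hm.
Qed.

Lemma gen_psi w : gen S4 (psi w).
Proof.
elim: w => [|s w IH]; first exact: gen_nil.
exact: (gen_mul S4_red (gen_psi_syl s) IH).
Qed.


Section Ab.
Variables (A B : zmodType) (n : nat).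
Variable fA : A -> 'rV[rat]_n.
Variable fB : B -> 'rV[rat]_n.
Hypothesis fAD : forall x y, fA (x + y) = fA x + fA y.
Hypothesis fBD : forall x y, fB (x + y) = fB x + fB y.

Definition ab_val (s : syl A B) := match s with inl x => fA x | inr y => fB y end.
Definition nu (w : word A B) := foldr (fun s acc => ab_val s + acc) 0 w.

Lemma fA0 : fA 0 = 0.
Proof. by apply/eqP; rewrite -(subrr (fA 0)) -{2}(addr0 0) fAD addrK. Qed.
Lemma fB0 : fB 0 = 0.
Proof. by apply/eqP; rewrite -(subrr (fB 0)) -{2}(addr0 0) fBD addrK. Qed.

Lemma nu_push s w : nu (push s w) = ab_val s + nu w.
Proof.
case: s => x; case: w => [|[y|y] w] /=.
- by case: eqP => [->|_] /=; rewrite ?fA0 ?add0r.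
- case: eqP => [h|_] /=; last by rewrite fAD addrA.
  by rewrite addrA -fAD h fA0 add0r.
- by case: eqP => [->|_] /=; rewrite ?fA0 ?add0r.
- by case: eqP => [->|_] /=; rewrite ?fB0 ?add0r.
- by case: eqP => [->|_] /=; rewrite ?fB0 ?add0r.
- case: eqP => [h|_] /=; last by rewrite fBD addrA.
  by rewrite addrA -fBD h fB0 add0r.
Qed.

Lemma nu_wmul u v : nu (wmul u v) = nu u + nu v.
Proof. elim: u => [|s u IH] /=; first by rewrite add0r. by rewrite nu_push IH addrA. Qed.

Lemma nu_winv w : red w -> nu (winv w) = - nu w.
Proof.
move=> h; apply/eqP; rewrite -subr_eq0 opprK -nu_wmul wmulVw //.
Qed.

Definition nmx (W : seq (word A B)) : 'M[rat]_(size W, n) := \matrix_(i < size W) nu (nth [::] W i).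

Lemma nu_mem W s : s \in W -> (nu s <= nmx W)%MS.
Proof.
move=> h; have hi : (index s W < size W)%N by rewrite index_mem.
have -> : nu s = row (Ordinal hi) (nmx W) by apply/rowP => j; rewrite !mxE nth_index.
exact: row_sub.
Qed.

Lemma nu_gen (W : seq (word A B)) x : all (@red A B) W -> gen W x -> (nu x <= nmx W)%MS.
Proof.
move=> hW /gen_gfold [l [hl ->]]; elim: l hl => [|[b s] l IH] /=.
  by rewrite sub0mx.
move=> /andP[hs hl].
rewrite nu_wmul; apply: addmx_sub; last exact: IH.
case: b; rewrite /itm /=; last exact: nu_mem.
by rewrite nu_winv ?eqmx_opp ?nu_mem //; apply: (allP hW).
Qed.

Lemma rank_lb (W : seq (word A B)) : all (@red A B) W -> (forall i : 'I_n, exists2 x, gen W x & nu x = delta_mx 0 i) ->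
  (n <= size W)%N.
Proof.
move=> hW hx; have : (1%:M <= nmx W)%MS.
  apply/row_subP => i; rewrite row1; have [x hg <-] := hx i; exact: nu_gen.
by move/mxrankS; rewrite mxrank1 => /leq_trans; apply; apply: rank_leq_row.
Qed.
End Ab.


Lemma pairD (u v : Z2) : u + v = (u.1 + v.1, u.2 + v.2).
Proof. by case: u v => [a b] [c d]. Qed.

Definition fA3 (x : int) : 'rV[rat]_3 := \row_(j < 3) (if val j == 0%N then x%:~R else 0).
Definition fB3 (v : Z2) : 'rV[rat]_3 :=
  \row_(j < 3) (if val j == 1%N then v.1%:~R else if val j == 2%N then v.2%:~R else 0).
Definition fA4 (v : Z2) : 'rV[rat]_4 :=
  \row_(j < 4) (if val j == 0%N then v.1%:~R else if val j == 1%N then v.2%:~R else 0).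
Definition fB4 (v : Z2) : 'rV[rat]_4 :=
  \row_(j < 4) (if val j == 2%N then v.1%:~R else if val j == 3%N then v.2%:~R else 0).

Lemma fA3D x y : fA3 (x + y) = fA3 x + fA3 y.
Proof. apply/rowP => j; rewrite !mxE; case: ifP => _; by rewrite ?intrD ?addr0. Qed.
Lemma fB3D x y : fB3 (x + y) = fB3 x + fB3 y.
Proof. apply/rowP => j; rewrite !mxE pairD /=; case: (nat_of_ord j == 1%N); case: (nat_of_ord j == 2%N); by rewrite ?intrD ?addr0. Qed.
Lemma fA4D x y : fA4 (x + y) = fA4 x + fA4 y.
Proof. apply/rowP => j; rewrite !mxE pairD /=; case: (nat_of_ord j == 0%N); case: (nat_of_ord j == 1%N); by rewrite ?intrD ?addr0. Qed.
Lemma fB4D x y : fB4 (x + y) = fB4 x + fB4 y.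
Proof. apply/rowP => j; rewrite !mxE pairD /=; case: (nat_of_ord j == 2%N); case: (nat_of_ord j == 3%N); by rewrite ?intrD ?addr0. Qed.

Definition tg3 : seq GW := [:: [:: inl 1]; [:: inr (1,0)]; [:: inr (0,1)]].
Definition tg4 : seq (word Z2 Z2) := [:: [:: inl (1,0)]; [:: inl (0,1)]; [:: inr (1,0)]; [:: inr (0,1)]].

Lemma tg3E (i : 'I_3) : nu fA3 fB3 (nth [::] tg3 i) = delta_mx 0 i.
Proof.
apply/rowP => j; rewrite !mxE.
case: i j => [[|[|[|k]]] hi] [[|[|[|l]]] hj] //=; rewrite ?mxE //=.
Qed.

Lemma tg4E (i : 'I_4) : nu fA4 fB4 (nth [::] tg4 i) = delta_mx 0 i.
Proof.
apply/rowP => j; rewrite !mxE.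
case: i j => [[|[|[|[|k]]]] hi] [[|[|[|[|l]]]] hj] //=; rewrite ?mxE //=.
Qed.

Lemma lift_seq (T U : eqType) (f : T -> U) (P : pred T) (S : seq U) :
  (forall s, s \in S -> exists2 w, P w & f w = s) -> exists W, map f W = S /\ all P W.
Proof.
elim: S => [|s S IH] h; first by exists [::].
have [w hw e] := h s (mem_head _ _).
have [|W [e2 hW]] := IH.
  by move=> s' h'; apply: h; rewrite inE h' orbT.
by exists (w :: W); rewrite /= e e2 hw.
Qed.

Lemma part1 g : reduced g -> (Fix g <-> gen S4 g).
Proof.
move=> hg; have hg' : red g by rewrite -reducedE.
split.
- case=> _ hphi; have [w _ <-] := fix_img hg' hphi; exact: gen_psi.
- by move=> h; split => //; apply: gen_fix.
Qed.

Lemma part3 g : reduced g -> (Fix g <-> exists2 w, reduced w & psi w = g).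
Proof.
move=> hg; have hg' : red g by rewrite -reducedE.
split.
- case=> _ hphi; have [w hw e] := fix_img hg' hphi.
  by exists w => //; rewrite reducedE.
- case=> w _ <-; split; first by rewrite reducedE psi_red.
  apply: gen_fix; exact: gen_psi.
Qed.


Lemma psi_gfold (W : seq (word Z2 Z2)) l : all (@red Z2 Z2) W -> all (fun p : bool * word Z2 Z2 => p.2 \in W) l ->
  psi (gfold l) = gfold (map (fun p => (p.1, psi p.2)) l).
Proof.
move=> hW; elim: l => [|[b w] l IH] //= /andP[hw hl].
have hwr : red w by apply: (allP hW).
rewrite psi_mul; last by apply: gfold_red; apply: (allS hW).
rewrite IH //; congr wmul.
by case: b; rewrite /itm //= psi_inv.
Qed.

Lemma rank_Fix S : generates S Fix -> (4 <= size S)%N.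
Proof.
case=> hS hgen.
have hSr : all (@red int Z2) S by apply: sub_all hS => s; rewrite reducedE.
have hfix : forall s, s \in S -> exists2 w, red w & psi w = s.
  move=> s hs; have hsr : red s by apply: (allP hSr).
  have := (hgen s (allP hS s hs)).2 (gen_mem hSr hs).
  by case=> _; apply: fix_img.
have [W [eW hW]] := lift_seq hfix.
have hgW : forall x, red x -> gen W x.
  move=> x hx.
  have : gen S (psi x).
    apply/(hgen _ _).1; first by rewrite reducedE psi_red.
    by rewrite part3 ?reducedE ?psi_red //; exists x => //; rewrite reducedE.
  move/gen_gfold => [l [hl e]].
  set l' := map (fun p : bool * GW => (p.1, nth [::] W (index p.2 S))) l.
  have hl' : all (fun p : bool * word Z2 Z2 => p.2 \in W) l'.
    rewrite all_map; apply/allP => p hp /=; apply: mem_nth.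
    by rewrite -(size_map psi) eW index_mem (allP hl).
  apply/gen_gfold; exists l'; split => //.
  apply: psi_inj => //; first by apply: gfold_red; apply: (allS hW).
  rewrite e (psi_gfold hW hl') -map_comp; congr gfold.
  rewrite -[LHS]map_id; apply/eq_in_map => -[b s] /= hs; congr pair.
  have hi : (index s S < size W)%N by rewrite -(size_map psi) eW index_mem (allP hl _ hs).
  by rewrite -(nth_map [::] [::]) // eW nth_index // (allP hl _ hs).
have hlb := @rank_lb _ _ 4 fA4 fB4 fA4D fB4D W hW.
rewrite -eW size_map; apply: hlb => i.
exists (nth [::] tg4 i); last exact: tg4E.
apply: hgW; by case: i => [[|[|[|[|k]]]] hi].
Qed.

Definition S3 : seq GW := [:: t_; a_; b_].
Lemma S3_red : all (@red int Z2) S3. Proof. by []. Qed.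

Lemma gen3 g : red g -> gen S3 g.
Proof.
elim: g => [|s g IH] h; first exact: gen_nil.
have hg := red_cons h.
have -> : s :: g = wmul [:: s] g by rewrite /wmul /= push_cons.
apply: (gen_mul S3_red); last exact: IH.
have hm : forall s : GW, s \in S3 -> gen S3 s by move=> s0 h0; exact: (gen_mem S3_red h0).
have hs : nz s by move: h; rewrite red_cons_iff => /and3P[].
case: s h hs => [n|v] h hs /=.
- have -> : [:: inl n] = singleL Z2 n by rewrite /singleL /= (negbTE hs).
  have ht : t_ = singleL Z2 (1 : int) by rewrite /singleL /=.
  have -> : singleL Z2 n = zpow t_ n by rewrite ht zpow_singleL intz.
  by apply: (gen_zpow S3_red); apply: hm.
- have -> : [:: inr v] = single int v by rewrite /single /= (negbTE hs).
  rewrite single_ab; apply: (gen_mul S3_red); apply: (gen_zpow S3_red); exact: hm.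
Qed.

Lemma rank_G S : generates S (@reduced int Z2) -> (3 <= size S)%N.
Proof.
case=> hS hgen.
have hSr : all (@red int Z2) S by apply: sub_all hS => s; rewrite reducedE.
apply: (@rank_lb _ _ 3 fA3 fB3 fA3D fB3D S hSr) => i.
exists (nth [::] tg3 i); last exact: tg3E.
apply/(hgen _ _).1; case: i => [[|[|[|k]]] hi] //.
Qed.

Local Close Scope ring_scope.

Theorem mainTheorem13 :
  (forall g : GW, reduced g ->
     (Fix g <-> gen [:: a_; b_; wmul t_ (wmul a_ (winv t_)); wmul t_ (wmul b_ (winv t_))] g)) /\
  {in @reduced Z2 Z2 &, injective psi} /\
  (forall g : GW, reduced g -> (Fix g <-> exists2 w, reduced w & psi w = g)) /\
  has_rank Fix 4 /\ has_rank (@reduced int Z2) 3 /\ 4 = (2 * (3 - 1))%N.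
Proof.
split; first exact: part1.
split.
  move=> u v hu hv; apply: psi_inj; by rewrite -reducedE.
split; first exact: part3.
split.
  split; last exact: rank_Fix.
  exists S4; split => //; split; first by [].
  exact: part1.
split; last by [].
split; last exact: rank_G.
exists S3; split => //; split; first by [].
move=> g hg; split => // _; apply: gen3; by rewrite -reducedE.
Qed.
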